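(* Fix $\alpha>0$ and $N\ge1$. For $u\in\mathbb{R}$ define the polynomial $P_u:\mathbb{R}^N\to\mathbb{R}$ by $$P_u(v)=-\alpha\left(\frac{|v|^2}{2}-\frac{|v|^4}{4}\right)+\frac{|v|^2}{2}-u v_1,$$ where $v=(v_1,\dots,v_N)$. For every $u>0$ the polynomial $P_u$ attains its global minimum only at the point $v^*(u)=(v_1^*(u),0,\dots,0)$, where $v_1^*(u)$ is a continuous function of $u>0$, is positive for $u>0$, and satisfies $v_1^*(1)=1$. *)

(* Defs.v *)
From HB Require Import structures.
From mathcomp Require Import all_boot all_order all_algebra.
From mathcomp Require Import all_classical all_reals all_analysis.
Set Implicit Arguments. Unset Strict Implicit. Unset Printing Implicit Defensive.
Import Order.TTheory GRing.Theory Num.Theory.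
Local Open Scope ring_scope.

Definition sqnorm (R : realType) (N : nat) (v : 'rV[R]_N) : R :=
  \sum_(i < N) v 0 i ^+ 2.

Definition P (R : realType) (N : nat) (i1 : 'I_N) (alpha u : R) (v : 'rV[R]_N) : R :=
  - alpha * (sqnorm v / 2 - (sqnorm v) ^+ 2 / 4) + sqnorm v / 2 - u * v 0 i1.

Definition first_axis (R : realType) (N : nat) (x : R) : 'rV[R]_N :=
  \row_(j < N) (if val j == 0%N then x else 0).

(* Main.v *)
Require Import Defs.
From HB Require Import structures.
From mathcomp Require Import all_boot all_order all_algebra.
From mathcomp Require Import all_classical all_reals all_analysis.
From mathcomp Require Import ring lra.
Import Order.TTheory GRing.Theory Num.Theory numFieldNormedType.Exports.
Local Open Scope classical_set_scope.
Local Open Scope ring_scope.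
Set Implicit Arguments. Unset Strict Implicit. Unset Printing Implicit Defensive.

Definition qf (R: realType) (alpha x : R) := alpha * x ^+ 3 + (1 - alpha) * x.

Lemma qf_K (R: realType) (alpha x : R) : 0 < x -> 0 < qf alpha x -> 0 < alpha * x ^+ 2 + 1 - alpha.
Proof. rewrite /qf => hx hq. nra. Qed.

Lemma qf_mono (R: realType) (alpha x y : R) : 0 < alpha -> 0 < x -> 0 < qf alpha x -> x < y -> qf alpha x < qf alpha y.
Proof. move=> ha hx hq hxy. have hK := qf_K hx hq. move: hq. rewrite /qf => hq.
have h1 : 0 < alpha * (x * y + y ^+ 2).
  have hxy2 : 0 < x * y by apply: mulr_gt0; lra.
  have hy2 : 0 < y ^+ 2 by apply: exprn_gt0; lra.
  exact: mulr_gt0 ha (addr_gt0 hxy2 hy2).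
have h2 : 0 < alpha * (x ^+ 2 + x * y + y ^+ 2) + 1 - alpha by lra.
have h3 : 0 < (y - x) * (alpha * (x ^+ 2 + x * y + y ^+ 2) + 1 - alpha).
  apply: mulr_gt0 => //; lra.
have -> : alpha * y ^+ 3 + (1 - alpha) * y = alpha * x ^+ 3 + (1 - alpha) * x + (y - x) * (alpha * (x ^+ 2 + x * y + y ^+ 2) + 1 - alpha) by ring.
lra. Qed.

Lemma qf_cont (R: realType) (alpha : R) : continuous (qf alpha).
Proof.
move=> x; rewrite /qf.
apply: cvgD; apply: cvgM; [exact: cvg_cst | exact: exprn_continuous | exact: cvg_cst | exact: cvg_id].
Qed.

Lemma qf_ex (R: realType) (alpha u : R) : 0 < alpha -> 0 < u -> exists x, 0 < x /\ qf alpha x = u.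
Proof.
move=> ha hu.
have hb : u <= qf alpha (1 + u).
  rewrite /qf.
  have h1 : 0 <= alpha * (1 + u) * ((1 + u) ^+ 2 - 1).
    apply: mulr_ge0; first by apply: mulr_ge0; lra.
    have : 0 <= u * (2 + u) by apply: mulr_ge0; lra.
    have -> : (1 + u) ^+ 2 - 1 = u * (2 + u) by ring.
    by [].
  have -> : alpha * (1 + u) ^+ 3 + (1 - alpha) * (1 + u) = (1 + u) + alpha * (1 + u) * ((1 + u) ^+ 2 - 1) by ring.
  lra.
have q0 : qf alpha 0 = 0 by rewrite /qf; ring.
have [c hc hqc] : exists2 c, c \in `[0, 1 + u] & qf alpha c = u.
  apply: (@IVT _ (qf alpha)); first lra.
    apply: continuous_subspaceT; exact: qf_cont.
  rewrite q0; apply/andP; split.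
    by rewrite ge_min; apply/orP; left; lra.
  by rewrite le_max; apply/orP; right.
exists c; split => //.
rewrite in_itv /= in hc; case/andP: hc => hc0 _.
rewrite lt_neqAle hc0 andbT; apply/eqP => c0; move: hqc; rewrite -c0 q0; lra.
Qed.

Lemma qf_uniq (R: realType) (alpha x y : R) : 0 < alpha -> 0 < x -> 0 < y ->
  0 < qf alpha x -> qf alpha x = qf alpha y -> x = y.
Proof.
move=> ha hx hy hq e.
case: (ltgtP x y) => // hxy.
  by have := qf_mono ha hx hq hxy; rewrite e ltxx.
have hq' : 0 < qf alpha y by rewrite -e.
by have := qf_mono ha hy hq' hxy; rewrite e ltxx.
Qed.

Definition v1f (R: realType) (alpha u : R) := xget 0 [set x | 0 < x /\ qf alpha x = u].

Lemma v1P (R: realType) (alpha u : R) : 0 < alpha -> 0 < u -> 0 < v1f alpha u /\ qf alpha (v1f alpha u) = u.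
Proof. move=> ha hu; exact: (xgetPex 0 (qf_ex ha hu)). Qed.

Lemma v1_qf (R: realType) (alpha x : R) : 0 < alpha -> 0 < x -> 0 < qf alpha x -> v1f alpha (qf alpha x) = x.
Proof.
move=> ha hx hq; have [h1 h2] := v1P ha hq.
have h3 : 0 < qf alpha (v1f alpha (qf alpha x)) by rewrite h2.
exact: (qf_uniq ha h1 hx h3 h2).
Qed.

Lemma v1_cont (R: realType) (alpha u : R) : 0 < alpha -> 0 < u -> {for u, continuous (v1f alpha)}.
Proof.
move=> ha hu; have [h1 h2] := v1P ha hu.
set x0 := v1f alpha u in h1 h2.
have : {near qf alpha x0, continuous (v1f alpha)}.
  apply: near_can_continuous; last by near=> y; exact: qf_cont.
  have hq := @qf_cont R alpha x0.
  have A : \forall y \near x0, 0 < y by exact: lt_nbhsr.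
  have B : \forall y \near x0, 0 < qf alpha y by apply: (cvgr_gt _ hq); rewrite h2.
  near=> y; apply: v1_qf => //; [near: y; exact: A | near: y; exact: B].
rewrite h2 => /nbhs_singleton; exact.
Unshelve. all: by end_near.
Qed.

Lemma sqnorm_split (R : realType) (N : nat) (i : 'I_N) (v : 'rV[R]_N) :
  sqnorm v = v 0 i ^+ 2 + \sum_(j < N | j != i) v 0 j ^+ 2.
Proof. by rewrite /sqnorm (bigD1 i). Qed.

Lemma fa_i (R : realType) (N : nat) (hN : (0 < N)%N) (x : R) : first_axis N x 0 (Ordinal hN) = x.
Proof. by rewrite /first_axis mxE. Qed.

Lemma fa_j (R : realType) (N : nat) (hN : (0 < N)%N) (x : R) (j : 'I_N) : j != Ordinal hN -> first_axis N x 0 j = 0.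
Proof.
move=> hj; rewrite /first_axis mxE; case: ifP => // /eqP h.
have hjo : j = Ordinal hN by apply: val_inj.
by move: hj; rewrite hjo eqxx.
Qed.

Lemma sqnorm_fa (R : realType) (N : nat) (hN : (0 < N)%N) (x : R) : sqnorm (first_axis N x) = x ^+ 2.
Proof.
rewrite (sqnorm_split (Ordinal hN)) fa_i big1 ?addr0 // => j hj.
by rewrite fa_j // expr0n.
Qed.

Unset Implicit Arguments.

Theorem lemma2p7 (R : realType) (alpha : R) (N : nat)
    (halpha : 0 < alpha) (hN : (0 < N)%N) :
  exists v1 : R -> R,
    {within [set u : R | 0 < u], continuous v1} /\
    (forall u : R, 0 < u -> 0 < v1 u) /\
    v1 1 = 1 /\
    (forall u : R, 0 < u ->
      (forall v : 'rV[R]_N,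
         P (Ordinal hN) alpha u (first_axis N (v1 u)) <= P (Ordinal hN) alpha u v) /\
      (forall v : 'rV[R]_N,
         P (Ordinal hN) alpha u v = P (Ordinal hN) alpha u (first_axis N (v1 u)) ->
         v = first_axis N (v1 u))).
Proof.
exists (v1f alpha); split.
  apply: continuous_in_subspaceT => u /set_mem /= hu; exact: v1_cont.
split; first by move=> u hu; have [] := v1P halpha hu.
split.
  have h1 : qf alpha 1 = 1 by rewrite /qf; ring.
  by rewrite -{1}h1 v1_qf // h1.
move=> u hu; have [hc hqc] := v1P halpha hu.
set c := v1f alpha u in hc hqc *.
have hK : 0 < alpha * c ^+ 2 + 1 - alpha by apply: qf_K => //; rewrite hqc.
have key : forall v : 'rV[R]_N, exists A B : R,
    [/\ 0 <= A, 0 <= B,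
     P (Ordinal hN) alpha u v - P (Ordinal hN) alpha u (first_axis N c) = A + B &
     (A = 0 -> B = 0 -> v = first_axis N c)].
  move=> v.
  pose a := v 0 (Ordinal hN).
  pose rest := \sum_(j < N | j != Ordinal hN) v 0 j ^+ 2.
  have hrest : 0 <= rest by apply: sumr_ge0 => j _; apply: sqr_ge0.
  have hs : sqnorm v = a ^+ 2 + rest by exact: sqnorm_split.
  have ha2 : 0 <= a ^+ 2 by apply: sqr_ge0.
  have hs0 : 0 <= sqnorm v by lra.
  pose r := Num.sqrt (sqnorm v).
  have hr : r ^+ 2 = sqnorm v by rewrite /r sqr_sqrtr.
  have hr0 : 0 <= r by rewrite /r sqrtr_ge0.
  have har : a <= r by nra.
  have hPv : P (Ordinal hN) alpha u v = - alpha * (r ^+ 2 / 2 - (r ^+ 2) ^+ 2 / 4) + r ^+ 2 / 2 - u * a.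
    by rewrite /P hr.
  have hPc : P (Ordinal hN) alpha u (first_axis N c) = - alpha * (c ^+ 2 / 2 - (c ^+ 2) ^+ 2 / 4) + c ^+ 2 / 2 - u * c.
    by rewrite /P (sqnorm_fa hN) fa_i.
  have hF : 0 < alpha * (r + c) ^+ 2 + 2 * (alpha * c ^+ 2 + 1 - alpha).
    have : 0 <= alpha * (r + c) ^+ 2 by apply: mulr_ge0; [lra | apply: sqr_ge0].
    lra.
  exists ((r - c) ^+ 2 / 4 * (alpha * (r + c) ^+ 2 + 2 * (alpha * c ^+ 2 + 1 - alpha))), (u * (r - a)).
  split.
  - apply: mulr_ge0; last lra. apply: mulr_ge0; [apply: sqr_ge0 | lra].
  - apply: mulr_ge0; lra.
  - by rewrite hPv hPc -hqc /qf; field.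
  - move=> hA hB.
    have hrc : r = c.
      move/eqP: hA; rewrite mulf_eq0 => /orP[|]; last by move/eqP => h; lra.
      rewrite mulf_eq0 invr_eq0 => /orP[|]; last by move/eqP => h; lra.
      by rewrite sqrf_eq0 subr_eq0 => /eqP.
    have hra : a = r.
      move/eqP: hB; rewrite mulf_eq0 => /orP[|]; first by move/eqP => h; lra.
      by rewrite subr_eq0 => /eqP.
    have hrest0 : rest = 0.
      have : sqnorm v = a ^+ 2 by rewrite -hr hra.
      lra.
    apply/rowP => j.
    case: (eqVneq j (Ordinal hN)) => [->|hj].
      by rewrite fa_i -/a hra hrc.
    rewrite fa_j //.
    move/eqP: hrest0; rewrite psumr_eq0; last by move=> i _; apply: sqr_ge0.
    move/allP => /(_ j (mem_index_enum j)); rewrite hj /= => /eqP.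
    by move/eqP; rewrite sqrf_eq0 => /eqP.
split.
  move=> v; have [A [B [hA hB hD _]]] := key v; lra.
move=> v hv; have [A [B [hA hB hD himp]]] := key v.
apply: himp; lra.
Qed.
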